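(* Let $K\ge1$, let $q_1,\dots,q_K$ be distinct primes, $p=q_1\cdots q_K$, $Q=\sum_{j=1}^K 1/q_j$, and let $d\ge0$ be an integer. For each $j$ let $\Lambda_j=q_j\mathbb Z$ and $$\Lambda_j^-=\{n\in\Lambda_j:\ \exists\, j'\ne j,\ \exists\, n'\in\Lambda_{j'}\text{ with }|n-n'|\le d\},\qquad \Lambda=\bigcup_{j=1}^K(\Lambda_j\setminus\Lambda_j^-).$$ Then for every integer $n_0$, $$pQ\Big(1-\frac{2K(d+1)}{\min_{j}q_j}\Big)<\#\big(\Lambda\cap[n_0,n_0+p)\big)\le pQ.$$ *)

(* Defs.v *)
From mathcomp Require Import all_boot all_order all_algebra.
From mathcomp Require Import boolp.
Set Implicit Arguments. Unset Strict Implicit. Unset Printing Implicit Defensive.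
Import Order.TTheory GRing.Theory Num.Theory.
Local Open Scope ring_scope.

Definition inLam (K : nat) (q : 'I_K -> nat) (j : 'I_K) (n : int) : Prop :=
  (((q j)%:Z %| n)%Z : Prop).

Definition inLamMinus (K : nat) (q : 'I_K -> nat) (d : nat) (j : 'I_K) (n : int) : Prop :=
  inLam q j n /\
  exists j' : 'I_K, j' <> j /\ exists n' : int, inLam q j' n' /\ `|n - n'| <= d%:Z.

Definition inLambda (K : nat) (q : 'I_K -> nat) (d : nat) (n : int) : Prop :=
  exists j : 'I_K, inLam q j n /\ ~ inLamMinus q d j n.

Definition countLambda (K : nat) (q : 'I_K -> nat) (d : nat) (n0 : int) (p : nat) : nat :=
  \sum_(k < p) (`[< inLambda q d (n0 + (k : nat)%:Z) >] : nat).

(* Main.v *)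
Require Import Defs.
From mathcomp Require Import all_boot all_order all_algebra.
From mathcomp Require Import boolp.
From mathcomp Require Import zify ring lra.
Import Order.TTheory GRing.Theory Num.Theory.
Local Open Scope ring_scope.

Definition cnt (P : int -> bool) (n0 : int) (L : nat) : nat :=
  (\sum_(0 <= k < L) (P (n0 + k%:Z)%R : nat))%N.

Lemma cnt_add (P : int -> bool) (n0 : int) a b : cnt P n0 (a + b) = (cnt P n0 a + cnt P (n0 + a%:Z) b)%N.
Proof.
rewrite /cnt (big_cat_nat (n:=a)) ?leq_addr //=; congr (_ + _)%N.
rewrite -{1}[a]add0n big_addn addKn; apply: eq_bigr => k _.
by rewrite PoszD; congr (nat_of_bool (P _)); ring.
Qed.

Lemma sum_le1 (I : finType) (b : I -> bool) :
  (forall i j, b i -> b j -> i = j) -> (\sum_i (b i : nat) <= 1)%N.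
Proof.
move=> H; case: (pickP b) => [i bi|none].
  rewrite (bigD1 i) //= big1 ?bi // => j jn.
  by case bj: (b j) => //; rewrite (H _ _ bi bj) eqxx in jn.
by rewrite big1 // => i _; rewrite none.
Qed.

Lemma cnt_le1 (P : int -> bool) (n0 : int) (M : nat) : (forall x y : int, P x -> P y -> (M%:Z %| x - y)%Z) -> (cnt P n0 M <= 1)%N.
Proof.
move=> H; rewrite /cnt big_mkord.
apply: (@sum_le1 _ (fun k : 'I_M => P (n0 + (k : nat)%:Z))) => i j Pi Pj.
have := H _ _ Pi Pj.
have -> : (n0 + (i : nat)%:Z - (n0 + (j : nat)%:Z) = (i : nat)%:Z - (j : nat)%:Z)%R by ring.
rewrite -eqz_mod_dvd !modz_nat.
by rewrite !modn_small // => /eqP [] /val_inj.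
Qed.

Lemma cnt_mul_le (P : int -> bool) (n0 : int) (M r : nat) : (forall x y : int, P x -> P y -> (M%:Z %| x - y)%Z) ->
  (cnt P n0 (M * r) <= r)%N.
Proof.
move=> H; elim: r n0 => [|r IH] n0; first by rewrite muln0 /cnt big_geq.
rewrite mulnS cnt_add -add1n leq_add //; exact: cnt_le1.
Qed.

Lemma cnt_ge1 (q : nat) n0 : (0 < q)%N -> (1 <= cnt (fun x => (q%:Z %| x)%Z) n0 q)%N.
Proof.
move=> q0; rewrite /cnt big_mkord.
have hk : (`|((- n0) %% q%:Z)%Z| < q)%N.
  rewrite -ltz_nat gez0_abs ?modz_ge0 ?ltz_pmod //; lia.
rewrite (bigD1 (Ordinal hk)) //= gez0_abs ?modz_ge0; last lia.
suff -> : (q%:Z %| n0 + ((- n0) %% q%:Z)%Z)%Z by [].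
by apply/dvdz_mod0P; rewrite modzDmr subrr mod0z.
done.
Qed.
Lemma cnt_dvd_eq (q p : nat) n0 : (0 < q)%N -> (q %| p)%N ->
  cnt (fun x => (q%:Z %| x)%Z) n0 p = (p %/ q)%N.
Proof.
move=> q0 qp; rewrite -{1}(divnK qp) mulnC; apply/eqP; rewrite eqn_leq; apply/andP; split.
  by apply: cnt_mul_le => x y hx hy; rewrite rpredB.
elim: (p %/ q)%N n0 => [|r IH] n0 //.
by rewrite mulnS cnt_add -add1n leq_add // cnt_ge1.
Qed.

Lemma cnt_pair_le (q1 q2 p : nat) (c n0 : int) : prime q1 -> prime q2 -> q1 != q2 ->
  (q1 * q2 %| p)%N ->
  (cnt (fun x => (q1%:Z %| x)%Z && (q2%:Z %| (x + c)%R)%Z) n0 p <= p %/ (q1 * q2))%N.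
Proof.
move=> p1 p2 ne qp; rewrite -{1}(divnK qp) mulnC; apply: cnt_mul_le.
move=> x y /andP[h1 h2] /andP[h3 h4]; rewrite PoszM Gauss_dvdz.
  rewrite rpredB //=; have -> : x - y = (x + c) - (y + c) by ring.
  by rewrite rpredB.
by change (coprime q1 q2); rewrite prime_coprime // dvdn_prime2.
Qed.

Lemma uppt K (q : 'I_K -> nat) d (x : int) :
  (`[< inLambda q d x >] <= \sum_j (((q j)%:Z %| x)%Z : nat))%N.
Proof.
case: (asboolP (inLambda q d x)) => //= -[j [hj _]].
by rewrite (bigD1 j) //= hj add1n.
Qed.

Lemma lowpt K (q : 'I_K -> nat) d (x : int) :
 (\sum_j (((q j)%:Z %| x)%Z : nat) <= `[< inLambda q d x >] +
   \sum_j \sum_(j' | j' != j) \sum_(t < (2*d+1)%N)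
     ((((q j)%:Z %| x)%Z && ((q j')%:Z %| (x + (t%:Z - d%:Z))%R)%Z) : nat))%N.
Proof.
case: (pickP (fun j => ((q j)%:Z %| x)%Z && ~~ `[< inLamMinus q d j x >])) =>
   [j0 /andP[A0 nM0] | none].
  have HL : `[< inLambda q d x >] = true.
    apply/asboolP; exists j0; split => // hM.
    by move/negP: nM0; apply; apply/asboolP.
  rewrite HL (bigD1 j0) //= A0 big1 ?addn0 //= => j hj.
  case Aj: ((q j)%:Z %| x)%Z => //; exfalso.
  move/negP: nM0; apply; apply/asboolP; split => //; exists j; split; first exact/eqP.
  by exists x; split => //; rewrite subrr normr0.
rewrite addnC (leq_trans _ (leq_addr _ _)) //; apply: leq_sum => j _.
case Aj: ((q j)%:Z %| x)%Z => //=.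
have := none j; rewrite /= Aj /= => /negbFE /asboolP [_ [j' [hne [n' [An' hd]]]]].
have [h1 h2] : (- (d%:Z) <= x - n') /\ (x - n' <= d%:Z) by apply/andP; rewrite -ler_norml.
have tz : (`|(n' - x + d%:Z)%R|%N)%:Z = n' - x + d%:Z by rewrite gez0_abs //; lia.
have ht : (`|(n' - x + d%:Z)%R|%N < (2 * d + 1)%N)%N by rewrite -ltz_nat tz; lia.
rewrite (bigD1 j') ?(introT eqP hne) //=.
rewrite (bigD1 (Ordinal ht)) //= tz.
have -> : x + ((n' - x + d%:Z) - d%:Z) = n' by ring.
  by rewrite An' /= -addnA add1n.
by apply/eqP.
Qed.

Theorem mainTheorem4 (K : nat) (q : 'I_K -> nat) (d : nat) (m : nat) (n0 : int)
  (hK : (1 <= K)%N)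
  (hprime : forall j, prime (q j))
  (hinj : injective q)
  (hm1 : exists j, q j = m)
  (hm2 : forall j, (m <= q j)%N) :
  let p : nat := (\prod_(j < K) q j)%N in
  let Q : rat := \sum_(j < K) ((q j)%:R)^-1 in
  (p%:R * Q * (1 - (2 * K * (d + 1))%:R / m%:R) < (countLambda q d n0 p)%:R :> rat)
  /\ ((countLambda q d n0 p)%:R <= p%:R * Q :> rat).
Proof.
move=> p Q.
have qgt0 j : (0 < q j)%N := prime_gt0 (hprime j).
have p0 : (0 < p)%N by apply: prodn_gt0.
have qdvd j : (q j %| p)%N by rewrite /p (bigD1 j) //= dvdn_mulr.
have q2dvd j j' : j' != j -> (q j * q j' %| p)%N.
  move=> hne; rewrite Gauss_dvd ?qdvd // prime_coprime // dvdn_prime2 //.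
  by apply: contra hne => /eqP /hinj ->.
pose a j := (p %/ q j)%N.
have cntA j : cnt (fun x => ((q j)%:Z %| x)%Z) n0 p = a j by apply: cnt_dvd_eq.
pose S := (\sum_j a j)%N.
have HQ : p%:R * Q = S%:R :> rat.
  rewrite /Q mulr_sumr /S natr_sum; apply: eq_bigr => j _.
  rewrite -{1}(divnK (qdvd j)) natrM mulfK // pnatr_eq0 -lt0n; exact: qgt0.
have cL : countLambda q d n0 p = cnt (fun x => `[< inLambda q d x >]) n0 p.
  by rewrite /cnt big_mkord.
have Hup : (countLambda q d n0 p <= S)%N.
  rewrite cL /S; under eq_bigr => j _ do rewrite -cntA.
  rewrite /cnt exchange_big /=; apply: leq_sum => k _; exact: uppt.
pose C j j' (t : 'I_(2*d+1)) := fun x : int =>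
  ((q j)%:Z %| x)%Z && ((q j')%:Z %| (x + (t%:Z - d%:Z))%R)%Z.
pose L := (\sum_j \sum_(j' | j' != j) \sum_(t < (2*d+1)%N) cnt (C j j' t) n0 p)%N.
have Hlow : (S <= countLambda q d n0 p + L)%N.
  rewrite cL /S; under eq_bigr => j _ do rewrite -cntA.
  have E (f : 'I_K -> 'I_K -> 'I_(2*d+1) -> nat -> nat) :
    (\sum_j \sum_(j' | j' != j) \sum_(t < (2*d+1)%N) \sum_(0 <= k < p) f j j' t k =
     \sum_(0 <= k < p) \sum_j \sum_(j' | j' != j) \sum_(t < (2*d+1)%N) f j j' t k)%N.
    rewrite [RHS]exchange_big; apply: eq_bigr => j _.
    rewrite [RHS]exchange_big; apply: eq_bigr => j' _.
    by rewrite [RHS]exchange_big.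
  rewrite /L /cnt exchange_big /= E -big_split /=.
  apply: leq_sum => k _; exact: lowpt.
have mL : (m * L <= (2*d+1) * (K-1) * S)%N.
  rewrite /L /S !big_distrr /=; apply: leq_sum => j _.
  apply: (@leq_trans (\sum_(j' | j' != j) ((2*d+1) * a j))%N).
    rewrite big_distrr /=; apply: leq_sum => j' hj'.
    rewrite big_distrr /=.
    apply: (@leq_trans (\sum_(t < (2*d+1)%N) a j)%N); last first.
      by rewrite big_const_ord iter_addn_0 mulnC.
    apply: leq_sum => t _.
    have e : a j = (q j' * (p %/ (q j * q j')))%N.
      rewrite /a; have := divnK (q2dvd _ _ hj'); set b := (p %/ (q j * q j'))%N => eb.
      by rewrite -{1}eb mulnCA mulKn // mulnC.
    rewrite e leq_mul //; apply: cnt_pair_le => //; last exact: q2dvd.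
    by apply: contra hj' => /eqP /hinj ->.
  rewrite (eq_bigl (fun j' => j' \in predC1 j)) // sum_nat_const cardC1 card_ord.
  by rewrite subn1 mulnCA mulnA leqnn.
have S0 : (0 < S)%N.
  case: hm1 => j0 _; rewrite /S (bigD1 j0) //= ltn_addr //.
  by rewrite /a divn_gt0 // dvdn_leq.
have m0 : (0 < m)%N by case: hm1 => j0 <-.
have key : (m * S < m * countLambda q d n0 p + 2 * K * (d + 1) * S)%N.
  have h1 := leq_mul (leqnn m) Hlow.
  nia.
rewrite HQ; split; last by rewrite ler_nat.
rewrite mulrBr mulr1 ltrBlDr -(ltr_pM2r (_ : 0 < m%:R)) ?ltr0n //.
rewrite mulrDl mulrA mulfVK ?pnatr_eq0 -?lt0n // -!natrM -natrD ltr_nat.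
by rewrite mulnC [(_ * m)%N]mulnC [(S * _)%N]mulnC.
Qed.
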